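(* Consider the click-through auction setting with $n\ge 2$ bidders, all with the same value $v_i=v\ge 0$. Suppose the CTR vector is uniformly distributed over two profiles $r,r'\in[0,1]^n$ for which there are two bidders $i\neq j$ such that $r_i=r'_j>r_j=r'_i\ge r_k$ and $r_i=r'_j>r_j=r'_i\ge r'_k$ for every $k\notin\{i,j\}$. Then for every $\varepsilon>0$ there is a calibrated, correlated information structure whose revenue is at least $vr_i-\varepsilon$.
   Context: Setting. There are $n$ bidders; bidder $i$ has known value per click $v_i$. The CTR vector $r\in[0,1]^n$ is drawn from a prior $G$ with finite support. An information structure is a probability distribution with finite support on pairs $(r,s)\in[0,1]^n\times[0,1]^n$ whose $r$-marginal is $G$. Given signals $s$, the winner $i^*$ maximizes $v_is_i$ (uniform tie-breaking), pays per click $p_{i^*}=\max_{j\ne i^*}v_js_j/s_{i^*}$ (revenue $0$ if $s_{i^*}=0$), only upon a click, which occurs with probability $r_{i^*}$; revenue is $\mathbb{E}[r_{i^*}p_{i^*}]$. Calibrated: $\mathbb{E}[r_i\mid s_i=t]=t$ for every $i$ and every $t$ with $\Pr[s_i=t]>0$. Correlated: not independent, where independent means $\mathbb{E}[r_i\mid s]=\mathbb{E}[r_i\mid s_i]$ for all $i$ and all $s$ in the support. *)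

(* Defs.v *)
From HB Require Import structures.
From mathcomp Require Import all_boot all_order all_algebra.
From mathcomp Require Import reals.
Set Implicit Arguments. Unset Strict Implicit. Unset Printing Implicit Defensive.
Import Order.TTheory GRing.Theory Num.Theory.
Local Open Scope ring_scope.

Section ClickAuction.
Variables (R : realType) (n : nat).

Notation vec := {ffun 'I_n -> R}.

(* An atom (p, (r, s)) of a finite-support distribution: weight p, CTR
   vector r, signal vector s. *)
Definition atom := (R * (vec * vec))%type.
Definition weight (a : atom) : R := a.1.
Definition ctr (a : atom) : vec := a.2.1.
Definition sig (a : atom) : vec := a.2.2.

Definition in01 (x : vec) : Prop := forall k, 0 <= x k <= 1.

Definition unif2 (r r' : vec) (x : vec) : R :=
  (if x == r then 1 / 2 else 0) + (if x == r' then 1 / 2 else 0).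

(* I (a finite list of atoms with positive weights, duplicates allowed) is an
   information structure on [0,1]^n x [0,1]^n whose r-marginal is G. *)
Definition is_info_struct (G : vec -> R) (I : seq atom) : Prop :=
  [/\ forall a, a \in I -> [/\ 0 < weight a, in01 (ctr a) & in01 (sig a)],
      \sum_(a <- I) weight a = 1
    & forall x : vec, \sum_(a <- I | ctr a == x) weight a = G x].

Definition prob_sk (I : seq atom) (k : 'I_n) (t : R) : R :=
  \sum_(a <- I | sig a k == t) weight a.
Definition condE_sk (I : seq atom) (k : 'I_n) (t : R) : R :=
  (\sum_(a <- I | sig a k == t) weight a * ctr a k) / prob_sk I k t.

Definition prob_s (I : seq atom) (σ : vec) : R :=
  \sum_(a <- I | sig a == σ) weight a.
Definition condE_s (I : seq atom) (k : 'I_n) (σ : vec) : R :=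
  (\sum_(a <- I | sig a == σ) weight a * ctr a k) / prob_s I σ.

Definition calibrated (I : seq atom) : Prop :=
  forall (k : 'I_n) (t : R), 0 < prob_sk I k t -> condE_sk I k t = t.

(* σ is in the support of the signal distribution (all weights are > 0). *)
Definition in_support (I : seq atom) (σ : vec) : bool :=
  has (fun a => sig a == σ) I.

Definition independent (I : seq atom) : Prop :=
  forall (k : 'I_n) (σ : vec), in_support I σ ->
    condE_s I k σ = condE_sk I k (σ k).

Definition correlated (I : seq atom) : Prop := ~ independent I.

Definition winners (v : 'I_n -> R) (σ : vec) : {set 'I_n} :=
  [set k | [forall l, v l * σ l <= v k * σ k]].

(* Price per click of bidder k when winning: max_{l <> k} v_l σ_l / σ_k,
   and 0 if σ_k = 0. (Bids v_l σ_l are >= 0, so 0 is a neutral start.) *)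
Definition price (v : 'I_n -> R) (σ : vec) (k : 'I_n) : R :=
  if σ k == 0 then 0
  else (\big[Num.max/0]_(l | l != k) (v l * σ l)) / σ k.

(* Expected revenue given CTR vector r and signals σ, averaging over the
   uniform tie-breaking: E[r_{i*} p_{i*}]. *)
Definition rev_given (v : 'I_n -> R) (r σ : vec) : R :=
  (#|winners v σ|%:R)^-1 * \sum_(k in winners v σ) r k * price v σ k.

Definition revenue (v : 'I_n -> R) (I : seq atom) : R :=
  \sum_(a <- I) weight a * rev_given v (ctr a) (sig a).

End ClickAuction.

(* Main.v *)
Require Import Defs.
From HB Require Import structures.
From mathcomp Require Import all_boot all_order all_algebra.
From mathcomp Require Import reals.
From mathcomp Require Import ring lra.
Import Order.TTheory GRing.Theory Num.Theory.
Local Open Scope ring_scope.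
Set Implicit Arguments. Unset Strict Implicit. Unset Printing Implicit Defensive.

Definition uL (R : realType) (a b : R) (M l : nat) : R :=
  b + (a - b) * l%:R / M.+1%:R.
Definition wt (R : realType) (M m : nat) : R := 'C(M, m)%:R / 2 ^+ M.+1.

Definition sigA (R : realType) n (i j : 'I_n) (a b : R) M (r r' : {ffun 'I_n -> R}) m
  : {ffun 'I_n -> R} :=
  [ffun k => if k == i then uL a b M m.+1 else if k == j then uL a b M m
             else (r k + r' k) / 2].
Definition sigB (R : realType) n (i j : 'I_n) (a b : R) M (r r' : {ffun 'I_n -> R}) m
  : {ffun 'I_n -> R} :=
  [ffun k => if k == i then uL a b M m else if k == j then uL a b M m.+1
             else (r k + r' k) / 2].
Definition atA (R : realType) n i j (a b : R) M (r r' : {ffun 'I_n -> R}) m : atom R n :=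
  (wt R M m, (r, sigA i j a b M r r' m)).
Definition atB (R : realType) n i j (a b : R) M (r r' : {ffun 'I_n -> R}) m : atom R n :=
  (wt R M m, (r', sigB i j a b M r r' m)).
Definition strI (R : realType) n i j (a b : R) M (r r' : {ffun 'I_n -> R}) :=
  map (atA i j a b M r r') (iota 0 M.+1) ++ map (atB i j a b M r r') (iota 0 M.+1).

Lemma iota_ord (R : realType) K (G : nat -> R) :
  \sum_(m <- iota 0 K) G m = \sum_(m < K) G m.
Proof. by rewrite -(big_mkord xpredT) /index_iota subn0. Qed.

Lemma sum_strI (R : realType) n i j (a b : R) M (r r' : {ffun 'I_n -> R})
  (P : pred (atom R n)) (F : atom R n -> R) :
  \sum_(x <- strI i j a b M r r' | P x) F x =
  \sum_(m < M.+1) ((if P (atA i j a b M r r' m) then F (atA i j a b M r r' m) else 0)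
                 + (if P (atB i j a b M r r' m) then F (atB i j a b M r r' m) else 0)).
Proof.
rewrite /strI big_cat !big_map big_split.
by apply: f_equal2; rewrite big_mkcond; apply: iota_ord.
Qed.

Lemma wsum (R : realType) M : \sum_(m < M.+1) wt R M m = 1 / 2.
Proof.
rewrite /wt -mulr_suml.
have := exprD1n (1 : R) M; rewrite (_ : 1 + 1 = 2 :> R) //.
under eq_bigr do rewrite expr1n.
move=> <-. rewrite exprS. field. by rewrite expf_neq0 // pnatr_eq0.
Qed.



Lemma u_le (R : realType) (a b : R) M l l' : b <= a -> (l <= l')%N ->
  uL a b M l <= uL a b M l'.
Proof.
move=> hab hl; rewrite /uL lerD2l ler_pM2r ?invr_gt0 ?ltr0n //.
by rewrite ler_wpM2l ?subr_ge0 // ler_nat.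
Qed.

Lemma u_lt (R : realType) (a b : R) M l l' : b < a -> (l < l')%N ->
  uL a b M l < uL a b M l'.
Proof.
move=> hab hl; rewrite /uL ltrD2l ltr_pM2r ?invr_gt0 ?ltr0n //.
by rewrite ltr_pM2l ?subr_gt0 // ltr_nat.
Qed.

Lemma u0 (R : realType) (a b : R) M : uL a b M 0 = b.
Proof. by rewrite /uL mulr0 mul0r addr0. Qed.

Lemma utop (R : realType) (a b : R) M : uL a b M M.+1 = a.
Proof. rewrite /uL; field. by rewrite nat1r pnatr_eq0. Qed.

Lemma calib_key (R : realType) (a b : R) M t :
  \sum_(m < M.+1) ((if uL a b M m.+1 == t then wt R M m * (a - uL a b M m.+1) else 0)
     + (if uL a b M m == t then wt R M m * (b - uL a b M m) else 0)) = 0.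
Proof.
rewrite big_split /= big_ord_recr big_ord_recl /= utop u0 !subrr !mulr0.
rewrite !if_same addr0 add0r -big_split /=.
apply: big1 => m _; rewrite /bump /=.
case: ifP => _; last by rewrite addr0.
rewrite /wt /uL.
have h := mul_bin_left M m.
have hm : (m <= M)%N by apply: ltnW.
have h' : (m.+1%:R * 'C(M, m.+1)%:R = (M%:R - m%:R) * 'C(M, m)%:R :> R).
  by rewrite -natrM h natrM natrB.
rewrite -[m.+1%:R]natr1 -[M.+1%:R]natr1 in h' *.
set x := 'C(M, m)%:R in h' *; set y := 'C(M, m.+1)%:R in h' *.
transitivity ((a - b) / (2 ^+ (M.+1) * (M%:R + 1)) * (x * (M%:R - m%:R) - y * (m%:R + 1))).
  by field; rewrite natr1 pnatr_eq0 expf_neq0 // pnatr_eq0.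
by rewrite (mulrC x) -h' (mulrC y) subrr mulr0.
Qed.



Lemma calib_of (R : realType) n (I : seq (atom R n)) k t :
  \sum_(x <- I | sig x k == t) weight x * (ctr x k - sig x k) = 0 ->
  0 < prob_sk I k t -> condE_sk I k t = t.
Proof.
move=> h hp; rewrite /condE_sk.
rewrite (eq_bigr (fun x => weight x * (ctr x k - sig x k) + weight x * t)); last first.
  by move=> x /eqP ->; ring.
rewrite big_split /= h add0r -mulr_suml -/(prob_sk I k t).
by rewrite mulrC mulKf // gt_eqF.
Qed.

Lemma sum_ge_one (R : realType) n (s : seq (atom R n)) x0 (P : pred (atom R n)) :
  x0 \in s -> P x0 -> (forall x, x \in s -> 0 <= weight x) ->
  weight x0 <= \sum_(x <- s | P x) weight x.
Proof.
move=> hx hP hw; rewrite (big_rem x0 hx) hP /= lerDl.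
rewrite big_seq_cond; apply: sumr_ge0 => x /andP [hx' _].
by apply: hw; apply: (mem_rem hx').
Qed.

Lemma rev_win (R : realType) n (v : R) (rho s : {ffun 'I_n -> R}) (p q : 'I_n) (x y : R) :
  0 < v -> p != q -> s p = x -> s q = y -> 0 <= y -> y < x ->
  (forall l, l != p -> l != q -> s l <= y) ->
  rev_given (fun _ => v) rho s = rho p * (v * y / x).
Proof.
move=> hv hpq hx hy hy0 hxy hl.
have hW : winners (fun _ => v) s = [set p].
  apply/setP => k; rewrite !inE.
  case: (k =P p) => [->|nk].
    apply/forallP => l; rewrite ler_pM2l // hx.
    case: (l =P p) => [->|nl]; first by rewrite hx.
    case: (l =P q) => [->|nq]; first by rewrite hy ltW.
    by apply: le_trans (ltW hxy); apply: hl; apply/eqP.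
  apply/negP => /forallP /(_ p); rewrite ler_pM2l // hx.
  apply/negP; rewrite -ltNge.
  case: (k =P q) => [->|nq]; first by rewrite hy.
  by apply: le_lt_trans hxy; apply: hl; apply/eqP.
rewrite /rev_given hW cards1 mulr1n invr1 mul1r big_set1 /price hx.
have -> : (x == 0) = false by apply/negbTE; rewrite gt_eqF // (le_lt_trans hy0).
congr (_ * (_ / _)).
apply: le_anti; apply/andP; split.
  apply: bigmax_le; first by rewrite mulr_ge0 // ltW.
  move=> l hlp; case: (l =P q) => [->|nq].
    have hq : s q <= y by rewrite hy.
    exact: (ler_wpM2l (ltW hv) hq).
  have hq : s l <= y by apply: hl => //; apply/eqP.
  exact: (ler_wpM2l (ltW hv) hq).
apply: (bigmax_sup q); first by rewrite eq_sym.
have hq : y <= s q by rewrite hy.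
exact: (ler_wpM2l (ltW hv) hq).
Qed.

Lemma rev0 (R : realType) n (rho s : {ffun 'I_n -> R}) :
  rev_given (fun _ => 0) rho s = 0.
Proof.
rewrite /rev_given big1 ?mulr0 // => k _.
rewrite /price; case: ifP => _; first by rewrite mulr0.
have -> : \big[Num.max/0]_(l | l != k) ((fun _ : 'I_n => (0:R)) l * s l) = 0.
  apply: le_anti; apply/andP; split; last by apply: bigmax_ge_id.
  by apply: bigmax_le => // l _; rewrite mul0r.
by rewrite mul0r mulr0.
Qed.



Lemma opn_neq0 (R : realType) k : (1 + k%:R : R) != 0.
Proof. rewrite gt_eqF //; have := ler0n R k; lra. Qed.

Lemma natS_neq0 (R : realType) k : (k.+1%:R : R) != 0.
Proof. by rewrite pnatr_eq0. Qed.

Lemma ratio (R : realType) (a b : R) M m : 0 <= b -> b < a ->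
  1 - 1 / m.+1%:R <= uL a b M m / uL a b M m.+1.
Proof.
move=> hb hab.
have hu : 0 < uL a b M m.+1 by apply: le_lt_trans hb _; rewrite -{1}(u0 a b M); apply: u_lt.
rewrite ler_pdivlMr // /uL -[m.+1%:R]natr1.
set k := m%:R; set N := M.+1%:R.
have hk : 0 <= k by rewrite /k ler0n.
have hN : 0 < N by rewrite /N ltr0n.
have -> : (1 - 1 / (k + 1)) * (b + (a - b) * (k + 1) / N) = b + (a - b) * k / N - b / (k + 1).
  have hk1 : k + 1 != 0 by rewrite gt_eqF //; lra.
  field; rewrite -/k hk1 /= nat1r pnatr_eq0 //.
rewrite lerBlDr lerDl divr_ge0 //; lra.
Qed.

Lemma binsum_bound (R : realType) M :
  \sum_(m < M.+1) wt R M m / m.+1%:R <= 1 / M.+1%:R.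
Proof.
have e : forall m : 'I_M.+1, wt R M m / m.+1%:R = 'C(M.+1, m.+1)%:R / (M.+1%:R * 2 ^+ M.+1).
  move=> m; rewrite /wt.
  have h := mul_bin_diag M.+1 m; rewrite /= in h.
  have h' : (M.+1%:R * 'C(M, m)%:R = m.+1%:R * 'C(M.+1, m.+1)%:R :> R) by rewrite -!natrM h.
  have h'' : 'C(M.+1, m.+1)%:R = M.+1%:R * 'C(M,m)%:R / m.+1%:R :> R.
    by rewrite h' (mulrC m.+1%:R) mulfK // pnatr_eq0.
  by rewrite h''; field; apply/and3P; split; rewrite ?expf_neq0 //; first [exact: natS_neq0 | exact: opn_neq0].
rewrite (eq_bigr _ (fun m _ => e m)) -mulr_suml.
have hs : \sum_(i < M.+1) 'C(M.+1, i.+1)%:R <= (2 : R) ^+ M.+1.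
  have := exprD1n (1 : R) M.+1; rewrite (_ : 1 + 1 = 2 :> R) // => ->.
  rewrite [X in _ <= X]big_ord_recl /=.
  under [X in _ <= _ + X]eq_bigr do rewrite expr1n.
  by rewrite lerDr mulrn_wge0 // exprn_ge0.
rewrite ler_pdivrMr ?mulr_gt0 ?exprn_gt0 ?ltr0n // mulrA mul1r mulVf ?mul1r //.
exact: natS_neq0.
Qed.

Lemma revsum (R : realType) (a b : R) M : 0 <= b -> b < a ->
  1 / 2 - 1 / M.+1%:R <= \sum_(m < M.+1) wt R M m * (uL a b M m / uL a b M m.+1).
Proof.
move=> hb hab.
apply: le_trans (_ : \sum_(m < M.+1) (wt R M m - wt R M m / m.+1%:R) <= _).
  rewrite sumrB wsum; apply: lerB => //; exact: binsum_bound.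
apply: ler_sum => m _.
have hw : 0 <= wt R M m by rewrite /wt divr_ge0 ?exprn_ge0 ?ler0n.
have := ratio M m hb hab.
move=> h; rewrite (_ : _ - _ = wt R M m * (1 - 1 / m.+1%:R)); last first.
  by rewrite mulrBr mulr1 mul1r.
by rewrite ler_wpM2l.
Qed.




Lemma u_in (R : realType) (a b : R) M l : 0 <= b -> b <= a -> a <= 1 -> (l <= M.+1)%N ->
  0 <= uL a b M l <= 1.
Proof.
move=> hb hab ha hl.
have h1 := u_le M hab (leq0n l); have h2 := u_le M hab hl.
rewrite u0 in h1; rewrite utop in h2.
apply/andP; split; [exact: le_trans h1 | exact: le_trans ha].
Qed.

Lemma wt_gt0 (R : realType) M (m : nat) : (m <= M)%N -> 0 < wt R M m.
Proof. by move=> h; rewrite /wt divr_gt0 ?exprn_gt0 // ltr0n bin_gt0. Qed.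

Lemma gen_sum (R : realType) M (c : bool) :
  \sum_(m < M.+1) (if c then wt R M m else 0) = if c then 1 / 2 else 0.
Proof. by case: c; [exact: wsum | rewrite big1]. Qed.

Unset Implicit Arguments.

Theorem mainTheorem5 (R : realType) (n : nat) (v : R)
    (r r' : {ffun 'I_n -> R}) (i j : 'I_n) :
  (2 <= n)%N -> 0 <= v -> in01 r -> in01 r' -> i != j ->
  r i = r' j -> r j < r' j -> r j = r' i ->
  (forall k : 'I_n, k != i -> k != j -> r k <= r' i /\ r' k <= r' i) ->
  forall eps : R, 0 < eps ->
    exists I : seq (atom R n),
      [/\ is_info_struct (unif2 r r') I, calibrated I, correlated I
        & v * r i - eps <= revenue (fun _ => v) I].
Proof.
move=> hn hv hr hr' hij hij1 hlt hij2 hk eps heps.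
set a := r i in hij1 *; set b := r j in hlt hij2 *.
have hab : b < a by rewrite hij1.
have hb0 : 0 <= b by have /andP [] := hr j.
have ha1 : a <= 1 by have /andP [] := hr i.
have hr'j : r' j = a by [].
have hr'i : r' i = b by [].
have hji : (j == i) = false by rewrite eq_sym; apply/negbTE.
have hc : forall k, k != i -> k != j -> (r k + r' k) / 2 <= b.
  move=> k h1 h2; have [h3 h4] := hk k h1 h2; rewrite -hij2 in h3 h4; lra.
have hc01 : forall k, 0 <= (r k + r' k) / 2 <= 1.
  move=> k; have /andP [h1 h2] := hr k; have /andP [h3 h4] := hr' k.
  apply/andP; split; lra.
pose K := Num.Def.archi_bound (2 * v / eps).
have hK : 2 * v / eps < K%:R by apply: archi_boundP; apply: divr_ge0; [apply: mulr_ge0 | exact: ltW].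
pose M := K.+1.
exists (strI i j a b M r r').
have Hmem : forall x, x \in strI i j a b M r r' ->
   (exists2 m, (m <= M)%N & x = atA i j a b M r r' m) \/
   (exists2 m, (m <= M)%N & x = atB i j a b M r r' m).
  move=> x; rewrite mem_cat => /orP [/mapP [m hm ->] | /mapP [m hm ->]];
    [left | right]; exists m => //; move: hm; rewrite mem_iota add0n ltnS;
    by case/andP.
have Hat : forall x, x \in strI i j a b M r r' ->
   [/\ 0 < weight x, in01 (ctr x) & in01 (sig x)].
  have hu : forall l, (l <= M.+1)%N -> 0 <= uL a b M l <= 1.
    by move=> l hl; apply: u_in => //; exact: ltW.
  move=> x /Hmem [[m hm ->]|[m hm ->]]; split; rewrite /weight /ctr /sig /=.
  - exact: wt_gt0.
  - exact: hr.
  - move=> k; rewrite ffunE; case: ifP => _; first by apply: hu.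
    case: ifP => _; last exact: hc01.
    by apply: hu; rewrite leqW.
  - exact: wt_gt0.
  - exact: hr'.
  - move=> k; rewrite ffunE; case: ifP => _; first by apply: hu; rewrite leqW.
    case: ifP => _; last exact: hc01.
    by apply: hu.
have Hcal : calibrated (strI i j a b M r r').
  move=> k t hp; apply: calib_of hp; rewrite sum_strI.
  case: (k =P i) => [->|nki].
    rewrite -[RHS](calib_key a b M t); apply: eq_bigr => m _.
    by rewrite /atA /atB /sig /ctr /weight /= !ffunE eqxx hr'i.
  case: (k =P j) => [->|nkj].
    rewrite -[RHS](calib_key a b M t); apply: eq_bigr => m _.
    by rewrite /atA /atB /sig /ctr /weight /= !ffunE hji eqxx hr'j addrC.
  apply: big1 => m _; rewrite /atA /atB /sig /ctr /weight /= !ffunE.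
  have -> : (k == i) = false by apply/eqP.
  have -> : (k == j) = false by apply/eqP.
  by case: ifP => _; [field | rewrite addr0].
have Hstr : is_info_struct (unif2 r r') (strI i j a b M r r').
  split.
  - exact: Hat.
  - rewrite sum_strI /= big_split /= wsum; by field.
  - move=> y; rewrite sum_strI /= big_split /= /ctr /weight /= (gen_sum R M (r == y)) (gen_sum R M (r' == y)) /unif2.
    by rewrite (eq_sym y r) (eq_sym y r').
have hw : forall x, x \in strI i j a b M r r' -> 0 <= weight x.
  by move=> x /Hat [h _ _]; exact: ltW.
have hin : atA i j a b M r r' M \in strI i j a b M r r'.
  rewrite mem_cat; apply/orP; left; apply: map_f; rewrite mem_iota add0n ltnSn andbT; exact: leq0n.
have hwM : 0 < weight (atA i j a b M r r' M) by apply: wt_gt0.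
split => //.
  move=> Hind.
  set s := sigA i j a b M r r' M.
  have hsup : in_support (strI i j a b M r r') s.
    by apply/hasP; exists (atA i j a b M r r' M).
  have := Hind j s hsup.
  have hsj : s j = uL a b M M by rewrite /s ffunE hji eqxx.
  rewrite (Hcal j (s j)); last first.
    apply: lt_le_trans hwM _; apply: sum_ge_one => //.
  have hP : 0 < prob_s (strI i j a b M r r') s.
    by apply: lt_le_trans hwM _; apply: sum_ge_one => //=.
  have -> : condE_s (strI i j a b M r r') j s = b.
    rewrite /condE_s.
    have -> : \sum_(x <- strI i j a b M r r' | sig x == s) weight x * ctr x j
        = b * prob_s (strI i j a b M r r') s.
      rewrite /prob_s mulr_sumr big_seq_cond [RHS]big_seq_cond.
      apply: eq_bigr => x /andP [hx /eqP hs]; rewrite mulrC; congr (_ * _).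
      case: (Hmem x hx) => [[m hm ex]|[m hm ex]]; first by rewrite ex.
      exfalso; move: hs; rewrite ex /sig /= => hs'.
      have := congr1 (fun f : {ffun 'I_n -> R} => f i) hs'.
      rewrite /s !ffunE !eqxx /= => e.
      have h1 := u_le M (ltW hab) hm.
      have h2 := u_lt M hab (ltnSn M).
      rewrite e in h1; by move: h2; rewrite ltNge h1.
    by rewrite mulrK // unitfE gt_eqF.
  rewrite hsj => e.
  have := u_lt M hab (ltn0Sn K); rewrite u0 -e; lra.
have [v0|vpos] : v = 0 \/ 0 < v by move: hv; rewrite le_eqVlt => /orP [/eqP <-|]; [left|right].
  rewrite /revenue big1 => [|x _]; first by rewrite v0 mul0r; lra.
  by rewrite v0 rev0 mulr0.
have hcu : forall m k, k != i -> k != j -> (r k + r' k) / 2 <= uL a b M m.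
  move=> m k h1 h2; apply: le_trans (hc k h1 h2) _.
  by rewrite -{1}(u0 a b M); apply: u_le => //; exact: ltW.
have hu0 : forall m, 0 <= uL a b M m.
  by move=> m; apply: le_trans hb0 _; rewrite -{1}(u0 a b M); apply: u_le => //; exact: ltW.
rewrite /revenue sum_strI /=.
rewrite (eq_bigr (fun m : 'I_M.+1 => 2 * (a * v) * (wt R M m * (uL a b M m / uL a b M m.+1)))); last first.
  move=> m _; rewrite /atA /atB /weight /ctr /sig /=.
  rewrite (@rev_win R n v r _ i j (uL a b M m.+1) (uL a b M m)) //; last first.
  - move=> l h1 h2; rewrite ffunE (negbTE h1) (negbTE h2); exact: hcu.
  - exact: u_lt.
  - by rewrite ffunE hji eqxx.
  - by rewrite ffunE eqxx.
  rewrite (@rev_win R n v r' _ j i (uL a b M m.+1) (uL a b M m)) //; last first.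
  - move=> l h1 h2; rewrite ffunE (negbTE h1) (negbTE h2); exact: hcu.
  - exact: u_lt.
  - by rewrite ffunE eqxx.
  - by rewrite ffunE hji eqxx.
  - by rewrite eq_sym.
  rewrite hr'j -/a; ring.
rewrite -mulr_sumr.
have hS := revsum M hb0 hab.
have hav : 0 <= 2 * (a * v) by rewrite mulr_ge0 // mulr_ge0 // ltW // (le_lt_trans hb0).
apply: le_trans (ler_wpM2l hav hS).
have hN : (0 : R) < M.+1%:R by rewrite ltr0n.
have -> : 2 * (a * v) * (1 / 2 - 1 / M.+1%:R) = a * v - 2 * (a * v) / M.+1%:R.
  by field; rewrite gt_eqF.
rewrite (mulrC v a); apply: lerB => //.
rewrite ler_pdivrMr //.
rewrite ltr_pdivrMr // in hK.
have hKN : (K%:R : R) <= M.+1%:R by rewrite ler_nat; apply: leq_trans (leqnSn K) (leqnSn _).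
have ha0 : 0 <= a by apply: le_trans hb0 (ltW hab).
nra.
Qed.
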